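(* Greedy retrieve actions are optimal: let $s_t$ be a state in which the current color $p_t\neq 0$ and there exists a lane $i\in\{1,\dots,L\}$ whose front (rightmost) car has color $B_{t,i,W}=p_t$. Then the retrieve action $a^*=i$ is optimal in $s_t$, i.e., the maximum cumulative reward over all valid action sequences starting in $s_t$ (and leading to the terminal state where upstream sequence and buffer are empty) is attained by a sequence whose first action is $a^*$.
   Context: Paint shop problem with a multi-lane buffer: an upstream sequence of cars with colors in $\{1,\dots,C\}$ is processed in order; the buffer has $L$ lanes, each a first-in-first-out queue of capacity $W$, with $B_{t,i,j}\in\{0,\dots,C\}$ the color at position $j$ of lane $i$ at time $t$ (0 = empty, position $W$ is the front/exit of the lane, new cars enter at the rightmost empty position). $e_{t,1}$ is the color of the next upstream car (0 if the upstream sequence is empty), and $p_t\in\{0,\dots,C\}$ is the color of the last car appended to the downstream sequence (0 initially). Actions: $a\in\{1,\dots,L\}$ retrieves the front car of lane $a$ and appends it to the downstream sequence (setting $p_{t+1}=B_{t,a,W}$); $a\in\{L+1,\dots,2L\}$ stores the next upstream car in lane $a-L$ (leaving $p$ unchanged). Reward: $r(s_t,a)=1$ for a valid retrieval with $B_{t,a,W}=p_t$; $0$ for a valid retrieval with $B_{t,a,W}\neq p_t$; $0$ for a valid store; $-10$ for an invalid action (retrieving from an empty lane, storing into a full lane, or storing when the upstream sequence is empty). The cumulative reward of actions $a_1,\dots,a_n$ from state $s_0$ is $r(s_0,a_1,\dots,a_n)=\sum_{t=0}^{n-1} r(s_t,a_{t+1})$, where $s_{t+1}$ results from applying $a_{t+1}$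 in $s_t$. An action $a^*$ is optimal in $s_t$ if $\max_{a_1,\dots,a_n}r(s_t,a^*,a_1,\dots,a_n)\ge r(s_t,a',a'_1,\dots,a'_n)$ for all actions $a',a'_1,\dots,a'_n$. *)

(* Defs.v *)
From mathcomp Require Import all_boot all_order all_algebra.
Set Implicit Arguments. Unset Strict Implicit. Unset Printing Implicit Defensive.
Import Order.TTheory GRing.Theory Num.Theory.

(* A state with L lanes.
   - [lanes s i] : contents of lane i as a FIFO queue; the HEAD of the list is
     the front car (position W, the exit), the LAST element is the most
     recently stored car (cars are packed towards the exit; 0 = empty slots
     are not represented).
   - [upstream s] : remaining upstream sequence, head = next car e_{t,1}.
   - [cur s] : p_t, colour of the last car appended downstream (0 initially). *)
Record state (L : nat) := mkState {
  lanes : {ffun 'I_L -> seq nat};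
  upstream : seq nat;
  cur : nat }.

(* Actions: [Retrieve i] is a = i+1, [Store i] is a = L+i+1 (0-based lanes). *)
Inductive action (L : nat) := Retrieve of 'I_L | Store of 'I_L.

Definition upd_lane L (f : {ffun 'I_L -> seq nat}) (i : 'I_L) (q : seq nat) :=
  [ffun j => if j == i then q else f j].

Definition wf_state (C W L : nat) (s : state L) : bool :=
  [&& all (fun c => 0 < c <= C) (upstream s),
      [forall i, all (fun c => 0 < c <= C) (lanes s i) && (size (lanes s i) <= W)]
    & cur s <= C].

Definition valid_action (W L : nat) (s : state L) (a : action L) : bool :=
  match a with
  | Retrieve i => lanes s i != [::]
  | Store i => (upstream s != [::]) && (size (lanes s i) < W)
  end.

Definition step (W L : nat) (s : state L) (a : action L) : state L * int :=
  match a with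
  | Retrieve i =>
      match lanes s i with
      | [::] => (s, (-10)%R)
      | c :: q => (mkState (upd_lane (lanes s) i q) (upstream s) c,
                   if c == cur s then 1%R else 0%R)
      end
  | Store i =>
      match upstream s with
      | [::] => (s, (-10)%R)
      | c :: u =>
          if size (lanes s i) < W
          then (mkState (upd_lane (lanes s) i (rcons (lanes s i) c)) u (cur s), 0%R)
          else (s, (-10)%R)
      end
  end.

Fixpoint cum_reward (W L : nat) (s : state L) (acts : seq (action L)) : int :=
  match acts with
  | [::] => 0%R
  | a :: r => ((step W s a).2 + cum_reward W (step W s a).1 r)%R
  end.

Fixpoint final_state (W L : nat) (s : state L) (acts : seq (action L)) : state L :=
  match acts with
  | [::] => s
  | a :: r => final_state W (step W s a).1 r
  end.

Fixpoint valid_seq (W L : nat) (s : state L) (acts : seq (action L)) : bool :=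
  match acts with
  | [::] => true
  | a :: r => valid_action W s a && valid_seq W (step W s a).1 r
  end.

Definition terminal L (s : state L) : bool :=
  (upstream s == [::]) && [forall i, lanes s i == [::]].

(* Main.v *)
Require Import Defs.
From mathcomp Require Import all_boot all_order all_algebra.
From mathcomp Require Import zify.
Import Order.TTheory GRing.Theory Num.Theory.

Section Helpers.
Set Implicit Arguments. Unset Strict Implicit.

Lemma invalid_step W L (t : state L) a :
  ~~ valid_action W t a -> step W t a = (t, (-10)%R).
Proof.
case: a => j /=; first by case: (lanes t j).
case: (upstream t) => [|c u] //=.
by move/negbTE => ->.
Qed.

Lemma cum_cat W L (t : state L) r1 r2 :
  cum_reward W t (r1 ++ r2) =
  (cum_reward W t r1 + cum_reward W (final_state W t r1) r2)%R.
Proof.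
elim: r1 t => [|a r IH] t /=; first by rewrite add0r.
by rewrite IH addrA.
Qed.

Lemma valid_cat W L (t : state L) r1 r2 :
  valid_seq W t (r1 ++ r2) =
  valid_seq W t r1 && valid_seq W (final_state W t r1) r2.
Proof. by elim: r1 t => [|a r IH] t //=; rewrite IH andbA. Qed.

Lemma final_cat W L (t : state L) r1 r2 :
  final_state W t (r1 ++ r2) = final_state W (final_state W t r1) r2.
Proof. by elim: r1 t => [|a r IH] t //=. Qed.

Lemma valid_ge0 W L (t : state L) r :
  valid_seq W t r -> (0 <= cum_reward W t r)%R.
Proof.
elim: r t => [|a r IH] t //= /andP [va vr].
rewrite addr_ge0 ?IH //.
clear vr; case: a va => j /=.
  by case: (lanes t j) => [|c q] //= _; case: (c == cur t).
by case: (upstream t) => [|c u] //=; case: (_ < W).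
Qed.

Lemma cur_change W L (f : {ffun 'I_L -> seq nat}) u c1 c2 r :
  valid_seq W (mkState f u c1) r ->
  valid_seq W (mkState f u c2) r /\
  (cum_reward W (mkState f u c1) r <=
   cum_reward W (mkState f u c2) r + (if c1 == c2 then 1 else 0) - (if c1 == c2 then 1 else 0) + (if c1 == c2 then 0 else 1))%R.
Proof.
elim: r f u c1 c2 => [|a r IH] f u c1 c2 /=.
  by split=> //; case: (c1 == c2).
case: a => j /=.
  case: (f j) => [|c q] //= vr; split=> //.
  case: (c =P c1); case: (c =P c2); case: (c1 =P c2); move=> *; subst; lia.
case: u => [|c u'] //=.
case: (size (f j) < W) => //= vr.
have [-> H] := IH _ _ _ c2 vr; split=> //.
move: H; case: (c1 == c2); lia.
Qed.
Set Implicit Arguments. Unset Strict Implicit.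

Lemma filter_valid W L (t : state L) r :
  exists r', valid_seq W t r' /\ (cum_reward W t r <= cum_reward W t r')%R.
Proof.
elim: r t => [|a r IH] t /=; first by exists [::].
case va: (valid_action W t a).
  have [r' [v1 h1]] := IH (step W t a).1.
  exists (a :: r'); rewrite /= va v1; split=> //.
  by rewrite lerD2l.
rewrite invalid_step ?va //=.
have [r' [v1 h1]] := IH t; exists r'; split=> //; lia.
Qed.

Definition relst L (i : 'I_L) (x : nat) (t t' : state L) :=
  [/\ upstream t = upstream t', cur t = cur t' &
      forall k, lanes t k = if k == i then x :: lanes t' k else lanes t' k].

Lemma main_sim W L (i : 'I_L) x r : forall (t t' : state L),
  relst i x t t' ->
  exists r', valid_seq W t' r' /\ (cum_reward W t r <= cum_reward W t' r' + 1)%R.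
Proof.
elim: r => [|a r IH] t t' R /=; first by exists [::].
case va: (valid_action W t a); last first.
  rewrite invalid_step ?va //=.
  have [r' [v1 h1]] := IH t t' R; exists r'; split=> //; lia.
case: R => Hu Hc Hl.
case: a va => j /=.
- case: (eqVneq j i) => [-> | ne].
  + rewrite Hl eqxx => _.
    rewrite [X in cum_reward W X r]/=; set t1 := (X in cum_reward W X r).
    have [r1 [v1 h1]] := filter_valid W t1 r.
    have E : t1 = mkState (lanes t') (upstream t') x.
      rewrite /t1 Hu; congr mkState; apply/ffunP => k; rewrite /upd_lane ffunE Hl.
      by case: eqP => [->|].
    rewrite E in v1 h1 *; clear E t1.
    have [v2 h2] := cur_change (cur t') v1.
    have Et : mkState (lanes t') (upstream t') (cur t') = t' by clear; case: t'.
    rewrite Et in v2 h2.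
    exists r1; split=> //.
    rewrite Hc; move: h1 h2.
    rewrite /=; case: (x == cur t'); lia.
  + rewrite Hl (negbTE ne).
    case E: (lanes t' j) => [|c q] //= _.
    have R1 : relst i x (mkState (upd_lane (lanes t) j q) (upstream t) c)
                      (mkState (upd_lane (lanes t') j q) (upstream t') c).
      split=> //= k; rewrite /upd_lane !ffunE Hl.
      case: (eqVneq k j) => [-> | ] //; by rewrite (negbTE ne).
    have [r' [v1 h1]] := IH _ _ R1.
    exists (Retrieve j :: r'); rewrite /= E /= v1 Hc; split=> //.
    case: (c == cur t'); lia.
- case Eu: (upstream t) => [|c u] //=.
  case Hs: (size (lanes t j) < W) => //= _.
  have Hs' : size (lanes t' j) < W.
    move: Hs; rewrite Hl; case: (j == i) => //= H; lia.
  have R1 : relst i x (mkState (upd_lane (lanes t) j (rcons (lanes t j) c)) u (cur t))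
                    (mkState (upd_lane (lanes t') j (rcons (lanes t' j) c)) u (cur t')).
    split=> //= k; rewrite /upd_lane !ffunE !Hl.
    case: (eqVneq k j) => [-> | ] //.
    by case: (j == i).
  have [r' [v1 h1]] := IH _ _ R1.
  exists (Store j :: r'); rewrite /= -Hu Eu /= Hs' /= v1; split=> //.
  lia.
Qed.
Set Implicit Arguments. Unset Strict Implicit.

Lemma drain1 W L (j : 'I_L) n : forall t : state L, size (lanes t j) = n ->
  [/\ valid_seq W t (nseq n (Retrieve j)),
      upstream (final_state W t (nseq n (Retrieve j))) = upstream t,
      lanes (final_state W t (nseq n (Retrieve j))) j = [::] &
      forall k, k != j -> lanes (final_state W t (nseq n (Retrieve j))) k = lanes t k].
Proof.
elim: n => [|n IH] t /=.
  by move/size0nil => ->; split.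
case E: (lanes t j) => [|c q] //= [Hq].
have Hs : size (lanes (mkState (upd_lane (lanes t) j q) (upstream t) c) j) = n.
  by rewrite /= /upd_lane ffunE eqxx.
have [v1 u1 l1 o1] := IH _ Hs.
split=> // k nk; rewrite o1 //= /upd_lane ffunE (negbTE nk) //.
Qed.

Lemma drain_list W L (r : seq 'I_L) : forall t : state L, exists sg,
  [/\ valid_seq W t sg, upstream (final_state W t sg) = upstream t &
      forall k, lanes (final_state W t sg) k = if k \in r then [::] else lanes t k].
Proof.
elim: r => [|j r IH] t; first by exists [::].
have [v1 u1 l1 o1] := drain1 W (erefl (size (lanes t j))).
set t2 := final_state W t _ in v1 u1 l1 o1.
have [sg [v2 u2 l2]] := IH t2.
exists (nseq (size (lanes t j)) (Retrieve j) ++ sg).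
rewrite valid_cat final_cat v1 -/t2 v2 u2 u1; split=> // k.
rewrite l2 in_cons; case: (eqVneq k j) => [->|nk] /=; first by rewrite l1; case: (_ \in _).
by rewrite o1.
Qed.

Lemma fill W L (i : 'I_L) u : 0 < W -> forall t : state L, upstream t = u ->
  (forall k, lanes t k = [::]) ->
  exists sg, valid_seq W t sg /\ terminal (final_state W t sg).
Proof.
move=> W0; elim: u => [|c u IH] t Hu Hl.
  exists [::]; split=> //=; rewrite /terminal Hu eqxx /=; apply/forallP => k; by rewrite Hl.
pose t2 := mkState (upd_lane (upd_lane (lanes t) i (rcons (lanes t i) c)) i [::]) u c.
have Hl2 : forall k, lanes t2 k = [::].
  by move=> k; rewrite /t2 /= /upd_lane !ffunE Hl; case: (k == i).
have [sg [v1 h1]] := IH t2 erefl Hl2.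
exists (Store i :: Retrieve i :: sg).
rewrite /= Hu /= (Hl i) W0 /= ffunE eqxx /=.
by move: v1 h1; rewrite /t2 (Hl i) => v1 h1; split.
Qed.

Lemma complete W L (i : 'I_L) (t : state L) : 0 < W ->
  exists sg, valid_seq W t sg /\ terminal (final_state W t sg).
Proof.
move=> W0.
have [s1 [v1 u1 l1]] := drain_list W (enum 'I_L) t.
have Hl1 : forall k, lanes (final_state W t s1) k = [::] by move=> k; rewrite l1 mem_enum.
have [s2 [v2 t2]] := fill i W0 erefl Hl1.
by exists (s1 ++ s2); rewrite valid_cat final_cat v1 v2.
Qed.

End Helpers.

Theorem theorem2 (C L W : nat) (s : state L) (i : 'I_L) :
  wf_state C W s ->
  cur s != 0 ->
  ohead (lanes s i) = Some (cur s) ->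
  forall (a' : action L) (acts' : seq (action L)),
  exists rest : seq (action L),
    [/\ valid_seq W s (Retrieve i :: rest),
        terminal (final_state W s (Retrieve i :: rest))
      & (cum_reward W s (a' :: acts') <= cum_reward W s (Retrieve i :: rest))%R].
Proof.
move=> wf _ hd a' acts'.
case E: (lanes s i) hd => [|p q] //= [Ep].
have W0 : 0 < W.
  move: wf => /and3P [_ /forallP /(_ i) /andP [_] ] .
  rewrite E /= => H; lia.
set t' := mkState (upd_lane (lanes s) i q) (upstream s) p.
have R : relst i p s t'.
  split=> //= k; rewrite /upd_lane ffunE.
  by case: eqP => [->|].
have [r' [v1 h1]] := main_sim W (a' :: acts') R.
have [r2 [v2 h2]] := complete (W:=W) i (final_state W t' r') W0.
exists (r' ++ r2); rewrite /= E /= -Ep eqxx /= -/t' valid_cat v1 v2 final_cat; split=> //.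
rewrite cum_cat.
have := valid_ge0 v2.
move: h1; rewrite /=.
lia.
Qed.
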